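(* Let $(\mathsf{K},d)$ be a compact metric space and let $\mathsf{S}_1\supseteq\mathsf{S}_2\supseteq\dots\supseteq\mathsf{S}_T$ be nonempty subsets of $\mathsf{K}$ such that $d_H(\mathsf{S}_i,\mathsf{S}_j)>\varepsilon$ for all $i\ne j$. Then $T\le N(\mathsf{K},\varepsilon)$.
   Context: $d_H$ is the Hausdorff distance induced by $d$. $N(\mathsf{K},r)$ is the $r$-packing number: the maximal $n$ such that there exist $\theta_1,\dots,\theta_n\in\mathsf{K}$ with $d(\theta_i,\theta_j)>r$ for all $i\ne j$. *)

(* Defs.v *)
From HB Require Import structures.
From mathcomp Require Import all_boot all_order all_algebra.
From mathcomp Require Import all_classical all_reals all_analysis.
Set Implicit Arguments. Unset Strict Implicit. Unset Printing Implicit Defensive.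
Import Order.TTheory GRing.Theory Num.Theory.
Local Open Scope classical_set_scope.
Local Open Scope ring_scope.

Definition hausdorff_dist {R : realType} {M : metricType R} (A B : set M) : \bar R :=
  Order.max
    (ereal_sup [set ereal_inf [set (mdist a b)%:E | b in B] | a in A])
    (ereal_sup [set ereal_inf [set (mdist a b)%:E | a in A] | b in B]).

Definition has_packing {R : realType} {M : metricType R} (K : set M) (r : R) (n : nat) : Prop :=
  exists f : 'I_n -> M, (forall i, K (f i)) /\
    (forall i j : 'I_n, i != j -> r < mdist (f i) (f j)).

Definition is_packing_number {R : realType} {M : metricType R} (K : set M) (r : R) (N : nat) : Prop :=
  has_packing K r N /\ (forall n, has_packing K r n -> (n <= N)%N).

(* Main.v *)
Require Import Defs.
From HB Require Import structures.
From mathcomp Require Import all_boot all_order all_algebra.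
From mathcomp Require Import all_classical all_reals all_analysis.
Import Order.TTheory GRing.Theory Num.Theory.
Local Open Scope classical_set_scope.
Local Open Scope ring_scope.

Lemma sep_point (R : realType) (M : metricType R) (eps : R) (A B : set M) :
  B `<=` A -> A !=set0 -> (eps%:E < hausdorff_dist A B)%E ->
  exists a, A a /\ forall b, B b -> eps < mdist a b.
Proof.
move=> BA [a0 Aa0]; rewrite /hausdorff_dist lt_max => /orP[].
- move=> /ereal_sup_gt [y [a Aa <-] ltey]; exists a; split => // b Bb.
  rewrite -lte_fin; apply: (lt_le_trans ltey); apply: ereal_inf_lbound.
  by exists b.
- move=> /ereal_sup_gt [y [b Bb yE] ltey].
  have : (y <= 0%:E)%E.
    rewrite -yE; apply: ereal_inf_lbound; exists b; first exact: BA.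
    by rewrite mdistxx.
  move=> y0; have := lt_le_trans ltey y0; rewrite lte_fin => eps0.
  exists a0; split => // b' _; exact: (lt_le_trans eps0 (mdist_ge0 _ _)).
Qed.

Theorem lemma2 (R : realType) (M : metricType R) (K : set M) (eps : R)
  (T : nat) (S : nat -> set M) (N : nat) :
  compact K ->
  (forall i, (i < T)%N -> S i `<=` K) ->
  (forall i, (i < T)%N -> S i !=set0) ->
  (forall i j, (i <= j)%N -> (j < T)%N -> S j `<=` S i) ->
  (forall i j, (i < T)%N -> (j < T)%N -> i <> j ->
     (eps%:E < hausdorff_dist (S i) (S j))%E) ->
  is_packing_number K eps N ->
  (T <= N)%N.
Proof.
move=> _ SK Sne Sdec Hd [_ Nmax]; apply: Nmax.
have ex : forall i : 'I_T, exists a, S i a /\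
    ((i.+1 < T)%N -> forall b, S i.+1 b -> eps < mdist a b).
  move=> i; case: (ltnP i.+1 T) => hi.
  - have [a [Sa Ha]] := @sep_point R M eps (S i) (S i.+1)
      (Sdec _ _ (leqnSn _) hi) (Sne _ (ltn_ord i))
      (Hd _ _ (ltn_ord i) hi (fun e => n_Sn _ e)).
    by exists a; split.
  - have [a Sa] := Sne _ (ltn_ord i); exists a; split => //.
case: (boolp.choice ex) => f Hf.
exists f; split; first by move=> i; apply: (SK _ (ltn_ord i)); case: (Hf i).
have key : forall i j : 'I_T, (i < j)%N -> eps < mdist (f i) (f j).
  move=> i j ij; have hi : (i.+1 < T)%N by apply: leq_ltn_trans ij _.
  apply: (proj2 (Hf i) hi); apply: (Sdec _ _ ij (ltn_ord j)).
  exact: (proj1 (Hf j)).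
move=> i j; rewrite neq_ltn => /orP[ij|ji]; first exact: key.
by rewrite metric_sym; apply: key.
Qed.
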